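(* Let $p \geq 2$ be an integer and $\mathbf{x},\mathbf{y} \in \operatorname{inc}(\mathbb{R},p)$ with $1 + x_jy_k > 0$ for all $j,k$. Let $C := (1+x_jy_k)_{j,k=1}^p$ and $C^{\circ\alpha} := ((1+x_jy_k)^\alpha)_{j,k=1}^p$. \begin{enumerate} \item If $\alpha > p-2$, then $C^{\circ\alpha}$ is $\mathrm{TP}$ (all minors of all orders are positive). \item If $\alpha \in \{0,1,\dots,p-2\}$, then $C^{\circ\alpha}$ has rank $\alpha+1$. \item If $\alpha \in (0,p-2)\setminus\mathbb{Z}$, then $C^{\circ\alpha}$ is not $\mathrm{TN}$; in fact there is a nonempty index set $J \subset \{1,\dots,p\}$ such that the principal minor $\det((1+x_jy_k)^\alpha)_{j,k\in J}$ is negative. \end{enumerate}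
   Context: For an integer $r \geq 1$, $\operatorname{inc}(\mathbb{R},r)$ denotes the set of $r$-tuples $(x_1,\dots,x_r) \in \mathbb{R}^r$ with $x_1 < \cdots < x_r$. A real matrix is $\mathrm{TN}$ (resp. $\mathrm{TP}$) if all its minors are $\ge0$ (resp. $>0$). *)

(* Defs.v *)
From mathcomp Require Import all_boot all_order all_algebra.
From mathcomp Require Import reals exp.
Set Implicit Arguments. Unset Strict Implicit. Unset Printing Implicit Defensive.
Import Order.TTheory GRing.Theory Num.Theory.
Local Open Scope ring_scope.

Definition incr_idx (k n : nat) (f : 'I_k -> 'I_n) : Prop :=
  forall i j : 'I_k, (i < j)%N -> (f i < f j)%N.

Definition incR (R : realType) (p : nat) (x : 'I_p -> R) : Prop :=
  forall i j : 'I_p, (i < j)%N -> x i < x j.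

Definition TP (R : realType) (m n : nat) (A : 'M[R]_(m, n)) : Prop :=
  forall (k : nat) (f : 'I_k -> 'I_m) (g : 'I_k -> 'I_n),
    (0 < k)%N -> incr_idx f -> incr_idx g -> 0 < \det (mxsub f g A).

Definition TN (R : realType) (m n : nat) (A : 'M[R]_(m, n)) : Prop :=
  forall (k : nat) (f : 'I_k -> 'I_m) (g : 'I_k -> 'I_n),
    (0 < k)%N -> incr_idx f -> incr_idx g -> 0 <= \det (mxsub f g A).

Definition powC (R : realType) (p : nat) (x y : 'I_p -> R) (alpha : R) : 'M[R]_p :=
  \matrix_(j, k) powR (1 + x j * y k) alpha.

(* Main.v *)
Require Import Defs.
From mathcomp Require Import all_boot all_order all_algebra.
From mathcomp Require Import all_classical all_reals all_analysis.
Import Order.TTheory GRing.Theory Num.Theory.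
Set Implicit Arguments. Unset Strict Implicit. Unset Printing Implicit Defensive.
Import numFieldNormedType.Exports.
Local Open Scope ring_scope.
Local Open Scope classical_set_scope.
From mathcomp Require Import ring lra zify.
Section P1.
Variable R : realType.

Lemma is_derive_comp1 (f g : R -> R) (x df dg : R) :
  is_derive x 1 f df -> is_derive (f x) 1 g dg -> is_derive x 1 (g \o f) (dg * df).
Proof.
move=> hf hg.
have df1 : derivable f x 1 by case: hf.
have dg1 : derivable g (f x) 1 by case: hg.
apply: DeriveDef.
  apply/derivable1_diffP; apply: differentiable_comp; exact/derivable1_diffP.
rewrite -derive1E derive1_comp // !derive1E.
by rewrite !derive_val.
Qed.

Lemma is_derive_aff (c x : R) : is_derive x 1 (fun t : R => 1 + t * c) c.
Proof.
have H := @is_deriveM R R id (cst c) x 1 1 0 (is_derive_id _ _) (is_derive_cst _ _ _).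
have H2 := @is_derive_cst R R R (1:R) x 1.
have H3 := is_deriveD H2 H.
apply: is_derive_eq H3 _.
by rewrite /= scaler0 !add0r /GRing.scale /= mulr1.
Qed.

Lemma is_derive_L (a c x : R) : 0 < 1 + x * c ->
  is_derive x 1 (fun t => powR (1 + t * c) a) (a * powR (1 + x * c) (a - 1) * c).
Proof.
move=> h.
have e : (fun t => powR (1 + t * c) a) = (fun y => powR y a) \o (fun t => 1 + t * c) by [].
rewrite e.
apply: is_derive_comp1; last exact: is_derive1_powR.
exact: is_derive_aff.
Qed.
End P1.

Section P2.
Variable R : realType.

Definition Sf n (c y : 'I_n -> R) (a x : R) : R :=
  \sum_(k < n) c k * powR (1 + x * y k) a.

Lemma powR_S1 (L b : R) : 0 < L -> powR L b = powR L (b - 1) * L.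
Proof.
move=> L0; rewrite -{3}(@powRr1 _ L) ?ltW // -powRD; first by rewrite subrK.
by apply/implyP => _; rewrite gt_eqF.
Qed.

Lemma pos_between (p q t y : R) : p <= t -> t <= q ->
  0 < 1 + p * y -> 0 < 1 + q * y -> 0 < 1 + t * y.
Proof.
move=> pt tq hp hq; have [y0|y0] := leP 0 y.
  apply: (lt_le_trans hp); rewrite lerD2l; exact: ler_wpM2r.
apply: (lt_le_trans hq); rewrite lerD2l; apply: ler_wnM2r => //; exact: ltW.
Qed.

Lemma is_derive_Sf n (c y : 'I_n -> R) (a x : R) :
  (forall k, 0 < 1 + x * y k) ->
  is_derive x 1 (Sf c y a) (\sum_(k < n) c k * (a * powR (1 + x * y k) (a - 1) * y k)).
Proof.
move=> hpos.
have -> : Sf c y a = \sum_(k < n) (fun t => c k * powR (1 + t * y k) a).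
  by rewrite fct_sumE; apply/funext => t.
have H : forall k, is_derive x 1 (fun t => c k * powR (1 + t * y k) a)
   (c k * (a * powR (1 + x * y k) (a - 1) * y k)).
  move=> k; apply: is_derive_eq (is_deriveZ (c k) (is_derive_L a (hpos k))) _.
  by [].
exact: (is_derive_sum H).
Qed.

Lemma is_derive_g n (c y : 'I_n -> R) (a y0 x : R) :
  (forall k, 0 < 1 + x * y k) -> 0 < 1 + x * y0 ->
  is_derive x 1 (fun t => Sf c y a t * powR (1 + t * y0) (- a))
    (a * powR (1 + x * y0) (- a - 1) * Sf (fun k => c k * (y k - y0)) y (a - 1) x).
Proof.
move=> hpos h0.
have H := is_deriveM (is_derive_Sf c a hpos) (is_derive_L (- a) h0).
apply: is_derive_eq H _.
rewrite /Sf /GRing.scale /= (powR_S1 (- a) h0).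
under eq_bigr => k _ do rewrite (powR_S1 a (hpos k)).
rewrite mulr_suml mulr_sumr mulr_sumr -big_split /=; apply: eq_bigr => k _.
ring.
Qed.
End P2.

Section P3.
Variable R : realType.

Lemma Sf_drop n (c y : 'I_n.+1 -> R) (k0 : 'I_n.+1) a x :
  c k0 = 0 ->
  Sf c y a x = Sf (fun k => c (lift k0 k)) (fun k => y (lift k0 k)) a x.
Proof.
move=> ck0; rewrite /Sf (bigD1_ord k0) //= ck0 mul0r add0r.
by [].
Qed.

Lemma Sf_one n (c y : 'I_n.+1 -> R) (k0 : 'I_n.+1) a x :
  (forall k, c (lift k0 k) = 0) ->
  Sf c y a x = c k0 * powR (1 + x * y k0) a.
Proof.
move=> h; rewrite /Sf (bigD1_ord k0) //= big1 ?addr0 // => k _.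
by rewrite h mul0r.
Qed.

Lemma Zcount n : forall (a : R), (forall l : nat, (l.+1 < n)%N -> a != l%:R) ->
  forall (c y z : 'I_n -> R), injective y -> (exists k, c k != 0) ->
  (forall i j : 'I_n, (i < j)%N -> z i < z j) ->
  (forall j k, 0 < 1 + z j * y k) ->
  exists j, Sf c y a (z j) != 0.
Proof.
elim: n => [|n IH] a Ha c y z yinj [k0 ck0] zinc zpos; first by case: k0 ck0 => m hm; exfalso; rewrite ltn0 in hm.
have [//|Hno] := pselect (exists j, Sf c y a (z j) != 0).
have H0 : forall j, Sf c y a (z j) = 0.
  by move=> j; apply/eqP; apply/negPn/negP => hj; apply: Hno; exists j.
pose c' := fun k : 'I_n => c (lift k0 k) * (y (lift k0 k) - y k0).
pose y' := fun k : 'I_n => y (lift k0 k).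
have [[k1 ck1]|Hc'] := pselect (exists k, c' k != 0); last first.
  exfalso.
  have hc : forall k, c (lift k0 k) = 0.
    move=> k; have : c' k = 0.
      by apply/eqP; apply/negPn/negP => hk; apply: Hc'; exists k.
    move/eqP; rewrite /c' mulf_eq0 => /orP[/eqP //|].
    rewrite subr_eq0 => /eqP /yinj /eqP; by rewrite eq_sym (negbTE (neq_lift _ _)).
  have := H0 ord0; rewrite (Sf_one _ _ _ hc) => /eqP; rewrite mulf_eq0 (negbTE ck0) /=.
  by rewrite gt_eqF // powR_gt0.
exfalso.
have a0 : a != 0.
  have n0 : (0 < n)%N := leq_ltn_trans (leq0n k1) (ltn_ord k1).
  by have := Ha 0%N; rewrite ltnS => /(_ n0).
pose lo := fun j : 'I_n => z (widen_ord (leqnSn n) j).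
pose hi := fun j : 'I_n => z (lift ord0 j).
have lohi : forall j, lo j < hi j.
  by move=> j; apply: zinc => /=; rewrite /bump leq0n add1n.
have posI : forall j t k, lo j <= t -> t <= hi j -> 0 < 1 + t * y k.
  move=> j t k h1 h2; exact: (pos_between h1 h2 (zpos _ k) (zpos _ k)).
pose g := fun t => Sf c y a t * powR (1 + t * y k0) (- a).
have rol : forall j : 'I_n, exists2 xi, xi \in `]lo j, hi j[%R &
    Sf (fun k => c k * (y k - y k0)) y (a - 1) xi = 0.
  move=> j.
  have der : forall t, lo j <= t -> t <= hi j -> is_derive t 1 g
      (a * powR (1 + t * y k0) (- a - 1) * Sf (fun k => c k * (y k - y k0)) y (a - 1) t).
    move=> t h1 h2; apply: is_derive_g; last exact: (posI j t k0 h1 h2).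
    by move=> k; exact: (posI j t k h1 h2).
  have [xi xiI dxi] : exists2 xi, xi \in `]lo j, hi j[%R & is_derive xi 1 g 0.
    apply: Rolle; first exact: lohi.
    - move=> t; rewrite in_itv /= => /andP[h1 h2].
      by have [] := der t (ltW h1) (ltW h2).
    - apply: derivable_within_continuous => t; rewrite in_itv /= => /andP[h1 h2].
      by have [] := der t h1 h2.
    - by rewrite /g /lo /hi !H0 !mul0r.
  exists xi => //.
  move: xiI; rewrite in_itv /= => /andP[h1 h2].
  case: (der xi (ltW h1) (ltW h2)) => _ e1; case: dxi => _ e0.
  move: e1; rewrite e0 => /esym /eqP.
  rewrite !mulf_eq0 (negbTE a0) /= gt_eqF ?powR_gt0 //=; last exact: (posI j xi k0 (ltW h1) (ltW h2)).
  by move/eqP.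
have rol' : forall j : 'I_n, exists xi, xi \in `]lo j, hi j[%R /\
    Sf (fun k => c k * (y k - y k0)) y (a - 1) xi = 0.
  by move=> j; have [xi h1 h2] := rol j; exists xi.
have [zz Hzz] := choice rol'.
have [j Hj] : exists j, Sf c' y' (a - 1) (zz j) != 0; last first.
  move: Hj; have := Hzz j => -[_].
  by rewrite (@Sf_drop _ _ _ k0) ?subrr ?mulr0 // => ->; rewrite eqxx.
apply: IH.
- move=> l hl; have := Ha l.+1; rewrite ltnS => /(_ hl).
  apply: contra => /eqP h; apply/eqP; by rewrite -natr1 -h subrK.
- by move=> i j /yinj /lift_inj.
- by exists k1.
- move=> i j ij.
  have [+ _] := Hzz j; have [+ _] := Hzz i.
  rewrite !in_itv /= => /andP[_ h1] /andP[h2 _].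
  apply: (lt_trans h1); apply: (le_lt_trans _ h2).
  rewrite /hi /lo.
  have : (lift ord0 i <= widen_ord (leqnSn n) j)%N by rewrite /= /bump leq0n add1n.
  rewrite leq_eqVlt => /orP[/eqP e|lt]; last exact: ltW (zinc _ _ lt).
  by have -> : lift ord0 i = widen_ord (leqnSn n) j by apply: val_inj.
- move=> j k; have [+ _] := Hzz j; rewrite in_itv /= => /andP[h1 h2].
  exact: (posI j _ _ (ltW h1) (ltW h2)).
Qed.
End P3.

Section P4.
Variable R : realType.

Definition bin (a : R) (i : nat) : R := (\prod_(l < i) (a - l%:R)) / (i`!)%:R.

Lemma bin0 a : bin a 0 = 1.
Proof. by rewrite /bin big_ord0 fact0 divr1. Qed.

Lemma bin_rec a i : bin a i.+1 * i.+1%:R = a * bin (a - 1) i.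
Proof.
rewrite /bin big_ord_recl /= subr0 factS natrM.
have -> : \prod_(i0 < i) (a - (bump 0 i0)%:R) = \prod_(l < i) (a - 1 - l%:R).
  by apply: eq_bigr => l _; rewrite /bump /= add1n -natr1 opprD addrA addrAC.
have h1 : (i.+1)%:R != 0 :> R by rewrite pnatr_eq0.
have h2 : (i`!)%:R != 0 :> R by rewrite pnatr_eq0 -lt0n fact_gt0.
rewrite invfM; field; by apply/andP.
Qed.

Lemma powR_bound0 a : exists C : R, 0 <= C /\ forall u : R, `|u| <= 1/2 ->
  `|powR (1 + u) a| <= C.
Proof.
exists (powR (1/2) a + powR (3/2) a); split; first by rewrite addr_ge0 ?powR_ge0.
move=> u hu; rewrite ger0_norm ?powR_ge0 //.
have [hl hr] : 1/2 <= 1 + u /\ 1 + u <= 3/2.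
  move: hu; rewrite ler_norml => /andP[h1 h2]; split; lra.
have [a0|a0] := leP 0 a.
  have h : powR (1 + u) a <= powR (3/2) a.
    apply: ge0_ler_powR => //; rewrite nnegrE; lra.
  by apply: (le_trans h); rewrite lerDr powR_ge0.
have h : powR (1 + u) a <= powR (1/2) a.
  have e : forall x, powR x a = (powR x (- a))^-1 by move=> x; rewrite -powRN opprK.
  rewrite !e lef_pV2 ?posrE ?powR_gt0 //; try lra.
  apply: ge0_ler_powR; rewrite ?nnegrE; lra.
by apply: (le_trans h); rewrite lerDl powR_ge0.
Qed.

Lemma is_derive_P1 (a t : R) : 0 < 1 + t ->
  is_derive t 1 (fun u => powR (1 + u) a) (a * powR (1 + t) (a - 1)).
Proof.
move=> h.
have e : (fun u => powR (1 + u) a) = (fun u => powR (1 + u * 1) a).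
  by apply/funext => u; rewrite mulr1.
rewrite e; apply: is_derive_eq; first by apply: is_derive_L; rewrite mulr1.
by rewrite !mulr1.
Qed.

Lemma is_derive_poly_sum n (b : nat -> R) (t : R) :
  is_derive t 1 (fun u => \sum_(i < n) b i * u ^+ i)
    (\sum_(i < n) b i * (i%:R * t ^+ i.-1)).
Proof.
have -> : (fun u => \sum_(i < n) b i * u ^+ i) = \sum_(i < n) (fun u => b i * u ^+ i).
  by rewrite fct_sumE; apply/funext => u.
have H : forall i : 'I_n, is_derive t 1 (fun u => b i * u ^+ i) (b i * (i%:R * t ^+ i.-1)).
  move=> i.
  have H1 := @is_deriveX R R id i t 1 1 (is_derive_id _ _).
  have -> : (fun u => b i * u ^+ i) = b i \*: (id ^+ i : R -> R).
    by apply/funext => u /=; rewrite exprfctE.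
  apply: is_derive_eq (is_deriveZ (b i) H1) _.
  by rewrite /GRing.scale /= mulr1.
exact: (is_derive_sum H).
Qed.

Lemma sum_shift n (a t : R) :
  \sum_(i < n.+1) bin a i * (i%:R * t ^+ i.-1) = a * \sum_(i < n) bin (a - 1) i * t ^+ i.
Proof.
rewrite big_ord_recl /= mul0r mulr0 add0r mulr_sumr; apply: eq_bigr => i _.
by rewrite /bump /= add1n mulrA bin_rec mulrA.
Qed.

Lemma Taylor n : forall a : R, exists C : R, 0 <= C /\ forall u : R, `|u| <= 1/2 ->
  `|powR (1 + u) a - \sum_(i < n) bin a i * u ^+ i| <= C * `|u| ^+ n.
Proof.
elim: n => [|n IH] a.
  have [C [C0 HC]] := powR_bound0 a.
  by exists C; split => // u hu; rewrite big_ord0 subr0 expr0 mulr1; apply: HC.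
have [C [C0 HC]] := IH (a - 1).
exists (`|a| * C); split; first by rewrite mulr_ge0.
move=> u hu.
pose phi := fun t => powR (1 + t) a - \sum_(i < n.+1) bin a i * t ^+ i.
pose dphi := fun t => a * (powR (1 + t) (a - 1) - \sum_(i < n) bin (a - 1) i * t ^+ i).
have phi0 : phi 0 = 0.
  rewrite /phi addr0 powR1 big_ord_recl /= expr0 mulr1 bin0 big1 ?addr0 ?subrr //.
  by move=> i _; rewrite expr0n /= mulr0.
have dph : forall t : R, `|t| <= 1/2 -> is_derive t 1 phi (dphi t).
  move=> t ht.
  have ht1 : 0 < 1 + t by move: ht; rewrite ler_norml => /andP[h1 h2]; lra.
  have H := is_deriveB (is_derive_P1 a ht1) (is_derive_poly_sum n.+1 (bin a) t).
  apply: is_derive_eq H _.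
  by rewrite sum_shift /dphi mulrBr.
have key : forall xi : R, `|xi| <= `|u| -> `|phi u| = `|dphi xi| * `|u| ->
    `|phi u| <= `|a| * C * `|u| ^+ n.+1.
  move=> xi hxi ->.
  rewrite /dphi normrM exprS -mulrA [`|u| * _]mulrC !mulrA.
  rewrite ler_wpM2r //; rewrite -mulrA ler_wpM2l //.
  apply: (le_trans (HC xi (le_trans hxi hu))).
  by rewrite ler_wpM2l // lerXn2r // nnegrE.
have [u0|u0] := leP 0 u.
  have [xi xiI hxi] : exists2 xi : R, xi \in `[0, u]%R & phi u - phi 0 = dphi xi * (u - 0).
    apply: MVT_segment => //.
    - move=> t; rewrite in_itv /= => /andP[h1 h2]; apply: dph.
      by rewrite ger0_norm ?(ltW h1) //; apply: le_trans hu; rewrite ger0_norm //; exact: ltW.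
    - apply: derivable_within_continuous => t; rewrite in_itv /= => /andP[h1 h2].
      have [] // := dph t; rewrite ger0_norm //; apply: le_trans hu; rewrite ger0_norm //.
  move: xiI; rewrite in_itv /= => /andP[h1 h2].
  apply: (key xi); first by rewrite !ger0_norm.
  by rewrite -[phi u]subr0 -phi0 hxi subr0 normrM.
have [xi xiI hxi] : exists2 xi : R, xi \in `[u, 0]%R & phi 0 - phi u = dphi xi * (0 - u).
  apply: MVT_segment; first exact: ltW.
  - move=> t; rewrite in_itv /= => /andP[h1 h2]; apply: dph.
    rewrite ler0_norm ?(ltW h2) //; apply: le_trans hu; rewrite ler0_norm ?(ltW u0) // lerN2; exact: ltW.
  - apply: derivable_within_continuous => t; rewrite in_itv /= => /andP[h1 h2].
    have [] // := dph t; rewrite ler0_norm //; apply: le_trans hu; rewrite ler0_norm ?(ltW u0) // lerN2 //.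
move: xiI; rewrite in_itv /= => /andP[h1 h2].
apply: (key xi); first by rewrite !ler0_norm ?(ltW u0) // lerN2.
have e : phi u = - (dphi xi * (0 - u)) by rewrite -hxi phi0 add0r opprK.
by rewrite e normrN normrM add0r normrN.
Qed.
End P4.

Section P5.
Variable R : realType.

Lemma cvg_sumR {T : Type} (F : set_system T) {FF : Filter F} (I : Type) (r : seq I)
  (f : I -> T -> R) (l : I -> R) :
  (forall i, f i t @[t --> F] --> l i) ->
  (\sum_(i <- r) f i t) @[t --> F] --> \sum_(i <- r) l i.
Proof. by move=> h; apply: cvg_big => //; exact: add_continuous. Qed.

Lemma cvg_prodR {T : Type} (F : set_system T) {FF : Filter F} (I : Type) (r : seq I)
  (f : I -> T -> R) (l : I -> R) :
  (forall i, f i t @[t --> F] --> l i) ->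
  (\prod_(i <- r) f i t) @[t --> F] --> \prod_(i <- r) l i.
Proof. by move=> h; apply: cvg_big => //; exact: mul_continuous. Qed.

Lemma cvgMR {T : Type} (F : set_system T) {FF : Filter F} (f g : T -> R) (a b : R) :
  f t @[t --> F] --> a -> g t @[t --> F] --> b -> (f t * g t) @[t --> F] --> a * b.
Proof. by move=> h1 h2; apply: cvgM. Qed.

Lemma det_cvg {T : Type} (F : set_system T) {FF : Filter F} n (A : T -> 'M[R]_n) (L : 'M[R]_n) :
  (forall i j, A t i j @[t --> F] --> L i j) -> \det (A t) @[t --> F] --> \det L.
Proof.
move=> h; rewrite /determinant; apply: cvg_sumR => s.
apply: cvgMR; first exact: cvg_cst.
by apply: cvg_prodR => i; apply: h.
Qed.

Lemma mx3_cvg {T : Type} (F : set_system T) {FF : Filter F} n (C D : 'M[R]_n)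
  (G : T -> 'M[R]_n) (LG : 'M[R]_n) :
  (forall i j, G t i j @[t --> F] --> LG i j) ->
  forall i k, (C *m G t *m D) i k @[t --> F] --> (C *m LG *m D) i k.
Proof.
move=> h i k.
have e : forall (M : 'M[R]_n), (C *m M *m D) i k = \sum_b (\sum_a C i a * M a b) * D b k.
  by move=> M; rewrite !mxE; apply: eq_bigr => b _; rewrite !mxE.
under eq_cvg do rewrite e.
rewrite e; apply: cvg_sumR => b; apply: cvgMR; last exact: cvg_cst.
apply: cvg_sumR => a; apply: cvgMR; first exact: cvg_cst.
exact: h.
Qed.

Lemma cvg0_right (f : R -> R) (K d : R) : 0 < d ->
  (forall t, 0 < t -> t < d -> `|f t| <= K * t) -> f t @[t --> 0^'+] --> 0.
Proof.
move=> d0 hb; apply/cvgr0Pnorm_lt => e e0.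
have K1 : 0 < `|K| + 1 by rewrite ltr_wpDl.
near=> t.
have t0 : 0 < t by near: t; exact: nbhs_right_gt.
have td : t < d by near: t; exact: nbhs_right_lt.
have te : t < e / (`|K| + 1) by near: t; apply: nbhs_right_lt; rewrite divr_gt0.
apply: (le_lt_trans (hb t t0 td)).
apply: (le_lt_trans (y := (`|K| + 1) * t)).
  rewrite ler_wpM2r ?ltW //; apply: (le_lt_trans (ler_norm K)); by rewrite ltrDl.
by rewrite mulrC -ltr_pdivlMr.
Unshelve. all: end_near.
Qed.
End P5.

Section P6.
Variable R : realType.

Definition Km n (x y : 'I_n -> R) (a : R) : 'M[R]_n :=
  \matrix_(j, k) powR (1 + x j * y k) a.
Definition bprod n (a : R) := \prod_(i < n) bin a i.
Definition Vm n (x : 'I_n -> R) : 'M[R]_n := \matrix_(j, i) x j ^+ i.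
Definition Dg n (d : 'I_n -> R) : 'M[R]_n := diag_mx (\row_i d i).

Lemma det_Vm_gt0 n (x : 'I_n -> R) : incR x -> 0 < \det (Vm x).
Proof.
move=> hx.
have -> : Vm x = (Vandermonde n (\row_j x j))^T.
  by apply/matrixP => j i; rewrite !mxE.
rewrite det_tr det_Vandermonde; apply: prodr_gt0 => i _; apply: prodr_gt0 => j ij.
by rewrite !mxE subr_gt0; apply: hx.
Qed.

Lemma Vm_unit n (x : 'I_n -> R) : incR x -> Vm x \in unitmx.
Proof. by move=> hx; rewrite unitmxE unitfE gt_eqF // det_Vm_gt0. Qed.

Lemma det_Dg n (d : 'I_n -> R) : \det (Dg d) = \prod_i d i.
Proof. by rewrite det_diag; apply: eq_bigr => i _; rewrite mxE. Qed.

Lemma Pentry n (x y : 'I_n -> R) (a t : R) j k :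
  (Vm x *m Dg (fun i : 'I_n => t ^+ i) *m Dg (fun i : 'I_n => bin a i) *m (Vm y)^T) j k =
  \sum_(i < n) bin a i * (t * x j * y k) ^+ i.
Proof.
rewrite /Dg !mul_mx_diag !mxE; apply: eq_bigr => i _; rewrite !mxE.
by rewrite !exprMn; ring.
Qed.

Lemma Dg_cancel n (t : R) (G : 'M[R]_n) : t != 0 ->
  Dg (fun i : 'I_n => t ^+ i) *m (Dg (fun i : 'I_n => (t ^+ i)^-1) *m G) = G.
Proof.
move=> t0; apply/matrixP => i j; rewrite /Dg !mul_diag_mx !mxE mulrA mulfV ?mul1r //.
by rewrite expf_neq0.
Qed.

End P6.

Section P7.
Variable R : realType.

Lemma pow_ratio (t : R) n (i : 'I_n) : 0 < t -> t < 1 -> (t ^+ i)^-1 * t ^+ n <= t.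
Proof.
move=> t0 t1.
have -> : t ^+ n = t ^+ i * t ^+ (n - i).-1.+1.
  by rewrite prednK ?subn_gt0 // -exprD subnKC // ltnW.
rewrite mulKf ?expf_neq0 ?gt_eqF // exprS.
rewrite -[leRHS]mulr1; apply: ler_wpM2l; first exact: ltW.
apply: exprn_ile1; exact: ltW.
Qed.

Lemma rho_bound n (a w : R) (i : 'I_n) : exists K d : R, 0 < d /\
  forall t, 0 < t -> t < d ->
   `|(t ^+ i)^-1 * (powR (1 + t * w) a - \sum_(l < n) bin a l * (t * w) ^+ l)| <= K * t.
Proof.
have [C [C0 HC]] := Taylor n a.
exists (C * `|w| ^+ n), (Num.min 1 (1 / (2 * (`|w| + 1)))); split.
  by rewrite lt_min ltr01 /= divr_gt0 // mulr_gt0 // ltr_wpDl.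
move=> t t0; rewrite lt_min => /andP[t1 t2].
have w1 : 0 < `|w| + 1 by rewrite ltr_wpDl.
have hu : `|t * w| <= 1 / 2.
  rewrite normrM ger0_norm ?(ltW t0) //.
  move: t2; rewrite ltr_pdivlMr ?mulr_gt0 // => t2.
  have : t * `|w| <= t * (`|w| + 1) by apply: ler_wpM2l; [exact: ltW | rewrite lerDl].
  move=> h; lra.
rewrite normrM normfV normrX ger0_norm ?(ltW t0) //.
apply: (le_trans (ler_wpM2l _ (HC _ hu))); first by rewrite invr_ge0 exprn_ge0 // ltW.
rewrite normrM exprMn ger0_norm ?(ltW t0) //.
have h1 := pow_ratio i t0 t1.
have h2 : 0 <= C * `|w| ^+ n by rewrite mulr_ge0 ?exprn_ge0.
set X := (t ^+ i)^-1 in h1 *; set T := t ^+ n in h1 *; set W := `|w| ^+ n in h2 *.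
nra.
Qed.
End P7.

Section P8.
Variable R : realType.

Lemma cvgDR {T : Type} (F : set_system T) {FF : Filter F} (f g : T -> R) (a b : R) :
  f t @[t --> F] --> a -> g t @[t --> F] --> b -> (f t + g t) @[t --> F] --> a + b.
Proof. by move=> h1 h2; apply: cvgD. Qed.

Lemma stepA n (x y : 'I_n -> R) (a : R) : incR x -> incR y -> bprod n a != 0 ->
  exists t : R, [/\ 0 < t, t < 1 & 0 < \det (Km (fun j => t * x j) y a) * bprod n a].
Proof.
move=> hx hy hb.
pose Xv := Vm x; pose Yv := Vm y.
pose Bd := Dg (fun i : 'I_n => bin a i).
pose Dl := fun t : R => Dg (fun i : 'I_n => t ^+ i).
pose Di := fun t : R => Dg (fun i : 'I_n => (t ^+ i)^-1).
pose rho := fun t : R => Km (fun j => t * x j) y a - Xv *m Dl t *m Bd *m Yv^T.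
pose E := fun t : R => Di t *m (invmx Xv *m rho t *m invmx Yv^T).
have fact : forall t : R, t != 0 ->
    Km (fun j => t * x j) y a = Xv *m Dl t *m (Bd + E t) *m Yv^T.
  move=> t t0; rewrite mulmxDr mulmxDl /E.
  have -> : Xv *m Dl t *m (Di t *m (invmx Xv *m rho t *m invmx Yv^T)) =
      Xv *m (invmx Xv *m rho t *m invmx Yv^T) by rewrite -mulmxA /Dl /Di Dg_cancel.
  rewrite !mulmxA mulmxV ?Vm_unit // mul1mx -mulmxA.
  rewrite -[rho t *m _ *m _]mulmxA mulVmx ?unitmx_tr ?Vm_unit // mulmx1.
  by rewrite mulmxA /rho addrC subrK.
have detf : forall t : R, 0 < t -> \det (Km (fun j => t * x j) y a) * bprod n a =
    \det Xv * \prod_(i < n) t ^+ i * (\det (Bd + E t) * bprod n a) * \det Yv.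
  move=> t t0; rewrite fact ?gt_eqF // !det_mulmx det_tr det_Dg; ring.
have cvE : forall i k, E t i k @[t --> 0^'+] --> 0.
  move=> i k.
  have e : forall t, E t i k = (invmx Xv *m ((t ^+ i)^-1 *: rho t) *m invmx Yv^T) i k.
    move=> t; rewrite -scalemxAr -scalemxAl [RHS]mxE /E /Di /Dg mul_diag_mx mxE.
    by rewrite [X in X * _]mxE.
  under eq_cvg do rewrite e.
  suff : (invmx Xv *m ((t ^+ i)^-1 *: rho t) *m invmx Yv^T) i k @[t --> 0^'+] -->
      (invmx Xv *m 0 *m invmx Yv^T) i k by rewrite mulmx0 mul0mx mxE.
  apply: (@mx3_cvg R R (0:R)^'+ _ n (invmx Xv) (invmx Yv^T) (fun t => (t ^+ i)^-1 *: rho t) 0) => p q.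
  rewrite mxE.
  have [K [d [d0 hbd]]] := rho_bound a (x p * y q) i.
  apply: (cvg0_right d0) => t t0 td.
  rewrite /rho /Xv /Yv /Dl /Bd mxE mxE [X in _ + X]mxE Pentry [Km _ _ _ p q]mxE -mulrA.
  exact: hbd.
have cvD : \det (Bd + E t) @[t --> 0^'+] --> \det Bd.
  apply: det_cvg => i j.
  under eq_cvg do rewrite mxE.
  suff : (Bd i j + E t i j) @[t --> 0^'+] --> Bd i j + 0 by rewrite addr0.
  apply: cvgDR; [exact: cvg_cst | exact: cvE].
have cvP : (\det (Bd + E t) * bprod n a) @[t --> 0^'+] --> bprod n a * bprod n a.
  apply: cvgMR; last exact: cvg_cst.
  by rewrite /bprod -det_Dg.
have bb : 0 < bprod n a * bprod n a by rewrite -expr2 exprn_even_gt0.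
have Hn : \forall t \near 0^'+, [/\ 0 < t, t < 1 & 0 < \det (Bd + E t) * bprod n a].
  near=> t; split.
  - by near: t; exact: nbhs_right_gt.
  - by near: t; apply: nbhs_right_lt; exact: ltr01.
  - by near: t; apply: (cvgr_gt _ cvP).
have [t [t0 t1 ht]] := filter_ex Hn.
exists t; split => //.
rewrite detf //; apply: mulr_gt0; last exact: det_Vm_gt0.
apply: mulr_gt0 => //; apply: mulr_gt0; first exact: det_Vm_gt0.
by apply: prodr_gt0 => i _; apply: exprn_gt0.
Unshelve. all: end_near.
Qed.
End P8.

Section P9.
Variable R : realType.

Lemma incR_inj n (x : 'I_n -> R) : incR x -> injective x.
Proof.
move=> hx i j e; apply/eqP; apply/negPn/negP => ne.
have [ij|ji] := ltnP i j.
  by have := hx _ _ ij; rewrite e ltxx.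
have ji' : (j < i)%N by rewrite ltn_neqAle eq_sym ji andbT; apply/eqP => /val_inj /eqP; rewrite (negbTE ne).
by have := hx _ _ ji'; rewrite e ltxx.
Qed.

Lemma Km_det_neq0 n (x y : 'I_n -> R) (a : R) :
  (forall l : nat, (l.+1 < n)%N -> a != l%:R) -> incR x -> incR y ->
  (forall j k, 0 < 1 + x j * y k) -> \det (Km x y a) != 0.
Proof.
move=> ha hx hy hp; apply/negP => /det0P [v v0 hv].
have [j hj] : exists j, Sf (fun j => v 0 j) x a (y j) != 0.
  apply: Zcount => //; first exact: incR_inj.
  - have [//|h] := pselect (exists k : 'I_n, v 0 k != 0).
    exfalso; move/negP: v0; apply.
    apply/eqP/rowP => k; rewrite mxE; apply/eqP; apply/negPn/negP => hk.
    by apply: h; exists k.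
  - by move=> j k; rewrite mulrC.
move: hj; have := congr1 (fun M : 'rV[R]_n => M 0 j) hv.
rewrite !mxE /Sf.
have -> : \sum_(j0 < n) v 0 j0 * Km x y a j0 j = \sum_(k < n) v 0 k * powR (1 + y j * x k) a.
  by apply: eq_bigr => k _; rewrite mxE [x k * _]mulrC.
by move=> ->; rewrite eqxx.
Qed.
End P9.

Section P10.
Variable R : realType.

Lemma det_sign n (x y : 'I_n -> R) (a : R) :
  (forall l : nat, (l.+1 < n)%N -> a != l%:R) -> incR x -> incR y ->
  (forall j k, 0 < 1 + x j * y k) -> bprod n a != 0 ->
  0 < \det (Km x y a) * bprod n a.
Proof.
move=> ha hx hy hp hb.
pose f := fun t : R => \det (Km (fun j => t * x j) y a) * bprod n a.
have posT : forall t : R, 0 <= t -> t <= 1 -> forall j k, 0 < 1 + t * (x j * y k).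
  move=> t t0 t1 j k; apply: (pos_between t0 t1); first by rewrite mul0r addr0.
  by rewrite mul1r.
have nz : forall t : R, 0 < t -> t <= 1 -> f t != 0.
  move=> t t0 t1; rewrite /f mulf_neq0 //; apply: Km_det_neq0 => //.
  - by move=> i j ij; rewrite ltr_pM2l //; apply: hx.
  - by move=> j k; rewrite -mulrA; apply: posT => //; exact: ltW.
have [t0 [t00 t01 ft0]] := stepA hx hy hb.
have cont : {within `[t0, 1], continuous f}.
  apply: continuous_in_subspaceT => t; rewrite inE /= in_itv /= => /andP[h1 h2].
  have tpos : 0 <= t by apply: ltW; exact: lt_le_trans h1.
  rewrite /continuous_at /f.
  apply: cvgMR; last exact: cvg_cst.
  apply: det_cvg => j k.
  have e : forall s : R, Km (fun j => s * x j) y a j k = powR (1 + s * (x j * y k)) a.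
    by move=> s; rewrite mxE mulrA.
  under eq_cvg do rewrite e.
  rewrite e.
  have [d _] := is_derive_L a (posT t tpos h2 j k).
  exact: (differentiable_continuous (proj1 (derivable1_diffP _ _) d)).
have [f1|f1] := ltP 0 (f 1).
  by move: f1; rewrite /f; have -> : (fun j => 1 * x j) = x by apply/funext => j; rewrite mul1r.
exfalso.
have [c cI fc] : exists2 c, c \in `[t0, 1]%R & f c = 0.
  apply: IVT (ltW t01) cont _.
  by rewrite ge_min le_max f1 orbT (ltW ft0).
move: cI; rewrite in_itv /= => /andP[c1 c2].
by have := nz c (lt_le_trans t00 c1) c2; rewrite fc eqxx.
Qed.
End P10.

Section P11.
Variable R : realType.

Lemma bin_gt0 (a : R) i : (forall l, (l < i)%N -> l%:R < a) -> 0 < bin a i.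
Proof.
move=> h; rewrite /bin divr_gt0 ?ltr0n ?fact_gt0 //.
by apply: prodr_gt0 => l _; rewrite subr_gt0; apply: h.
Qed.

Lemma bprod_gt0 (a : R) k : (forall l, (l.+2 <= k)%N -> l%:R < a) -> 0 < bprod k a.
Proof.
move=> h; apply: prodr_gt0 => i _; apply: bin_gt0 => l li; apply: h.
by apply: leq_trans (ltn_ord i); rewrite ltnS.
Qed.

Lemma incr_inj k p (f : 'I_k -> 'I_p) : incr_idx f -> injective f.
Proof.
move=> hf i j e; apply/eqP; apply/negPn/negP => ne.
have [ij|ji] := ltnP i j.
  by have := hf _ _ ij; rewrite e ltnn.
have ji' : (j < i)%N by rewrite ltn_neqAle eq_sym ji andbT; apply/eqP => /val_inj /eqP; rewrite (negbTE ne).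
by have := hf _ _ ji'; rewrite e ltnn.
Qed.

Lemma incr_le k p (f : 'I_k -> 'I_p) : incr_idx f -> (k <= p)%N.
Proof. by move=> /incr_inj /leq_card; rewrite !card_ord. Qed.

Lemma mxsub_Km p k (x y : 'I_p -> R) (a : R) (f g : 'I_k -> 'I_p) :
  mxsub f g (powC x y a) = Km (fun j => x (f j)) (fun j => y (g j)) a.
Proof. by apply/matrixP => i j; rewrite !mxE. Qed.

Lemma incR_comp p k (x : 'I_p -> R) (f : 'I_k -> 'I_p) : incR x -> incr_idx f ->
  incR (fun j => x (f j)).
Proof. by move=> hx hf i j ij; apply: hx; apply: hf. Qed.

Lemma widen_incr k p (h : (k <= p)%N) : incr_idx (widen_ord h).
Proof. by move=> i j. Qed.

Lemma rank_mxsub m n k l (f : 'I_k -> 'I_m) (g : 'I_l -> 'I_n) (A : 'M[R]_(m, n)) :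
  (\rank (mxsub f g A) <= \rank A)%N.
Proof.
have -> : mxsub f g A = rowsub f 1%:M *m A *m colsub g 1%:M.
  by rewrite mulmx_colsub mulmx1 mul_rowsub_mx mul1mx; apply/matrixP => i j; rewrite !mxE.
by apply: leq_trans (mxrankM_maxl _ _) _; apply: mxrankM_maxr.
Qed.
End P11.

Theorem mainTheorem8 (R : realType) (p : nat) (x y : 'I_p -> R) :
  (2 <= p)%N -> incR x -> incR y ->
  (forall j k : 'I_p, 0 < 1 + x j * y k) ->
  [/\ (forall alpha : R, (p%:R - 2) < alpha -> TP (powC x y alpha)),
      (forall a : nat, (a <= p - 2)%N -> \rank (powC x y a%:R) = a.+1)
    & (forall alpha : R, 0 < alpha -> alpha < p%:R - 2 ->
         ~ (exists z : int, alpha = z%:~R) ->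
         ~ TN (powC x y alpha) /\
         exists (k : nat) (f : 'I_k -> 'I_p), [/\ (0 < k)%N, incr_idx f &
           \det (mxsub f f (powC x y alpha)) < 0])].
Proof.
move=> p2 hx hy hp; split.
- move=> alpha ha k f g k0 hf hg.
  have kp := incr_le hf.
  have hl : forall l, (l.+2 <= k)%N -> l%:R < alpha.
    move=> l hl; apply: le_lt_trans ha.
    have h1 : (l.+2)%:R <= p%:R :> R by rewrite ler_nat; exact: leq_trans hl kp.
    have h2 : (l.+2)%:R = l%:R + 2 :> R by rewrite -addn2 natrD.
    lra.
  have bp := bprod_gt0 hl.
  rewrite mxsub_Km -(pmulr_lgt0 _ bp).
  apply: det_sign.
  + by move=> l hl'; rewrite gt_eqF //; apply: hl.
  + exact: incR_comp.
  + exact: incR_comp.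
  + by move=> j k'; apply: hp.
  + exact: lt0r_neq0.
- move=> a ha; apply/eqP; rewrite eqn_leq; apply/andP; split.
  + pose Xa : 'M[R]_(p, a.+1) := \matrix_(j, i) x j ^+ i.
    pose Ya : 'M[R]_(p, a.+1) := \matrix_(j, i) y j ^+ i.
    pose Da : 'M[R]_(a.+1) := diag_mx (\row_(i < a.+1) ('C(a, i))%:R).
    have e : powC x y a%:R = Xa *m (Da *m Ya^T).
      rewrite mul_diag_mx; apply/matrixP => j k; rewrite !mxE.
      rewrite powR_mulrn ?(ltW (hp j k)) // addrC exprD1n.
      apply: eq_bigr => i _; rewrite !mxE -mulr_natl exprMn; ring.
    rewrite e; apply: leq_trans (mxrankM_maxl _ _) (rank_leq_col _).
  + have ap : (a.+1 <= p)%N by lia.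
    have := rank_mxsub (widen_ord ap) (widen_ord ap) (powC x y a%:R).
    rewrite mxsub_Km mxrank_unit //.
    rewrite unitmxE unitfE; apply: Km_det_neq0.
    * by move=> l hl; rewrite eqr_nat; apply/eqP; lia.
    * exact: incR_comp hx (widen_incr ap).
    * exact: incR_comp hy (widen_incr ap).
    * by move=> j k; apply: hp.
- move=> alpha a0 ap nint.
  set m := Num.truncn alpha.
  have /andP[hm1 hm2] := truncn_itv (ltW a0).
  have neq : forall l : nat, alpha != l%:R.
    move=> l; apply/eqP => e; apply: nint; exists l%:Z; by rewrite e pmulrn.
  have hm : m%:R < alpha by rewrite lt_neqAle hm1 eq_sym neq.
  have kp : (m.+3 <= p)%N.
    have h1 : (m.+2)%:R < p%:R :> R.
      have h2 : (m.+2)%:R = m%:R + 2 :> R by rewrite -addn2 natrD.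
      lra.
    by move: h1; rewrite ltr_nat.
  have binpos : forall i, (i <= m.+1)%N -> 0 < bin alpha i.
    move=> i hi; apply: bin_gt0 => l hl; apply: le_lt_trans hm; rewrite ler_nat; lia.
  have bneg : bin alpha m.+2 < 0.
    rewrite /bin big_ord_recr /= pmulr_llt0 ?invr_gt0 ?ltr0n ?fact_gt0 //.
    rewrite pmulr_rlt0 ?subr_lt0 //.
    apply: prodr_gt0 => l _; rewrite subr_gt0; apply: le_lt_trans hm; rewrite ler_nat; have := ltn_ord l; lia.
  have bp : bprod m.+3 alpha < 0.
    rewrite /bprod big_ord_recr /= pmulr_rlt0 //.
    by apply: prodr_gt0 => i _; apply: binpos; rewrite -ltnS.
  have hdet : \det (mxsub (widen_ord kp) (widen_ord kp) (powC x y alpha)) < 0.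
    rewrite mxsub_Km -(nmulr_lgt0 _ bp).
    apply: det_sign.
    + by move=> l _; apply: neq.
    + exact: incR_comp hx (widen_incr kp).
    + exact: incR_comp hy (widen_incr kp).
    + by move=> j k; apply: hp.
    + exact: ltr0_neq0.
  split.
  + move=> hT; have := hT _ _ _ (ltn0Sn _) (widen_incr kp) (widen_incr kp).
    by rewrite leNgt hdet.
  + by exists m.+3, (widen_ord kp); split => //; exact: widen_incr.
Qed.
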